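(* Let $X\sim\mathrm{TDL}(a,b,c,d)$ with admissible parameters, $a\neq0$ and $c\in(0,1)$, and let $\mu=E[X]$, $\sigma^2=\mathrm{Var}[X]$, $D=\sigma^2/\mu$. Then $$m_3:=E[(X-\mu)^3]=\frac{\sigma^4}{\mu}+d\mu\sigma^2+\frac{c(1-a)\mu}{(1-c)^2},$$ $$m_4:=E[(X-\mu)^4]=3(2d+1)\sigma^4+\frac{\big(4c(1-a)+(1-ac)^2\big)\sigma^2}{(1-c)^2}+\frac{c^2(1-a^2)\mu}{(1-c)^3}.$$ Consequently the skewness and kurtosis are $$\frac{m_3}{\sigma^3}=\frac{D}{\sigma}+\frac{d\sigma}{D}+\frac{c(1-a)}{(1-c)^2\sigma D},\qquad \frac{m_4}{\sigma^4}=3(2d+1)+\frac{4c(1-a)+(1-ac)^2}{(1-c)^2\sigma^2}+\frac{c^2(1-a^2)}{(1-c)^3\sigma^2 D}.$$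
   Context: $\operatorname{sgn}$ is the sign function with $\operatorname{sgn}(0)=0$. Tempered Discrete Linnik law $\mathrm{TDL}(a,b,c,d)$: the law on $\mathbb{N}$ with probability generating function $g(s)=\big(1+\operatorname{sgn}(a)\,b\,d\,((1-cs)^a-(1-c)^a)\big)^{-1/d}$, $s\in[0,1]$, with admissible parameters $d>0$, $b>0$, and either $a\le0$, $c\in[0,1)$, or $a\in(0,1]$, $c\in[0,1]$. Under the stated hypotheses $\mu=|a|\,b\,c\,(1-c)^{a-1}>0$. *)

(* Defs.v *)
From Stdlib Require Import Reals.
Open Scope R_scope.

Definition sgn (x : R) : R :=
  if Rlt_dec 0 x then 1 else if Rlt_dec x 0 then -1 else 0.

(* real power x^a for x >= 0, with the convention 0^a = 0
   (only used with a > 0 at x = 0 for admissible parameters) *)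
Definition rpow (x a : R) : R :=
  if Rle_dec x 0 then 0 else Rpower x a.

Definition TDL_admissible (a b c d : R) : Prop :=
  0 < d /\ 0 < b /\
  ((a <= 0 /\ 0 <= c < 1) \/ (0 < a <= 1 /\ 0 <= c <= 1)).

Definition TDL_pgf (a b c d s : R) : R :=
  Rpower (1 + sgn a * b * d * (rpow (1 - c * s) a - rpow (1 - c) a)) (- (1 / d)).

Definition is_TDL_pmf (a b c d : R) (p : nat -> R) : Prop :=
  (forall n, 0 <= p n) /\
  (forall s, 0 <= s <= 1 -> infinite_sum (fun n => p n * s ^ n) (TDL_pgf a b c d s)).

(* Main.v *)
Require Import Defs.
From Coquelicot Require Import Coquelicot.
From Stdlib Require Import Reals Lra Lia List.
Open Scope R_scope.


Lemma sum_n_nonneg (a : nat -> R) N : (forall n, 0 <= a n) -> 0 <= sum_n a N.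
Proof.
  intros Ha; induction N as [|N IH].
  - rewrite sum_O; auto.
  - rewrite sum_Sn; unfold plus; simpl; specialize (Ha (S N)); lra.
Qed.

Lemma sum_n_incr (a : nat -> R) : (forall n, 0 <= a n) -> forall N, sum_n a N <= sum_n a (S N).
Proof. intros Ha N; rewrite sum_Sn; unfold plus; simpl; specialize (Ha (S N)); lra. Qed.

Lemma sum_pow_lower (a : nat -> R) s N : (forall n, 0 <= a n) -> 0 < s <= 1 ->
  s ^ N * sum_n a N <= sum_n (fun n => a n * s ^ n) N.
Proof.
  intros Ha Hs; induction N as [|N IH].
  - rewrite !sum_O; simpl; lra.
  - rewrite !sum_Sn; unfold plus; simpl.
    assert (0 <= sum_n a N) by (apply sum_n_nonneg; auto).
    assert (s * s ^ N <= s ^ N).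
    { assert (0 <= s ^ N) by (apply pow_le; lra). nra. }
    specialize (Ha (S N)). nra.
Qed.

Lemma pow_le_one s N : 0 <= s <= 1 -> s ^ N <= 1.
Proof. intros Hs; induction N; simpl; [lra|]. assert (0 <= s ^ N) by (apply pow_le; lra). nra. Qed.

Lemma sum_pow_upper (a : nat -> R) s N : (forall n, 0 <= a n) -> 0 <= s <= 1 ->
  sum_n (fun n => a n * s ^ n) N <= sum_n a N.
Proof.
  intros Ha Hs; induction N as [|N IH].
  - rewrite !sum_O; simpl; specialize (Ha O); lra.
  - rewrite !sum_Sn; unfold plus; simpl.
    assert (s ^ N <= 1) by (apply pow_le_one; lra).
    assert (0 <= s ^ N) by (apply pow_le; lra).
    assert (s * s ^ N <= 1) by nra.
    specialize (Ha (S N)). nra.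
Qed.

Lemma at_left_01 : at_left 1 (fun s => 0 < s < 1).
Proof.
  unfold at_left, within.
  apply (locally_interval _ 1 (Finite 0) (Finite 2)); simpl; try lra.
  intros y H0 H1 H2; lra.
Qed.

Lemma monotone_abel (a : nat -> R) (F : R -> R) :
  (forall n, 0 <= a n) ->
  (forall s, 0 < s < 1 -> is_series (fun n => a n * s ^ n) (F s)) ->
  continuous F 1 ->
  is_series a (F 1).
Proof.
  intros Ha Hs Hc.
  assert (HcL : filterlim F (at_left 1) (locally (F 1))).
  { eapply filterlim_filter_le_1; [apply filter_le_within|exact Hc]. }
  assert (Hb : forall N, sum_n a N <= F 1).
  { intros N.
    assert (Hp : filterlim (fun s => s ^ N * sum_n a N) (at_left 1) (locally (sum_n a N))).
    { eapply filterlim_filter_le_1; [apply filter_le_within|].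
      assert (Hcc : continuous (fun s => s ^ N * sum_n a N) 1).
      { apply (ex_derive_continuous (K := R_AbsRing) (V := R_NormedModule)). auto_derive. auto. }
      unfold continuous in Hcc. rewrite pow1, Rmult_1_l in Hcc. exact Hcc. }
    assert (H := filterlim_le (F := at_left 1) (fun s => s ^ N * sum_n a N) F
                  (sum_n a N) (F 1)).
    simpl in H. apply H.
    - apply filter_imp with (2 := at_left_01). intros s Hs01.
      eapply Rle_trans; [apply sum_pow_lower; auto; lra|].
      apply is_lim_seq_incr_compare.
      + apply (Hs s Hs01).
      + intros n; apply sum_n_incr; intros k; specialize (Ha k);
          apply Rmult_le_pos; auto; apply pow_le; lra.
    - exact Hp.
    - exact HcL. }
  assert (Hex : ex_finite_lim_seq (sum_n a)).
  { apply ex_finite_lim_seq_incr with (F 1); auto. apply sum_n_incr; auto. }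
  destruct Hex as [S HS].
  assert (HS1 : S <= F 1).
  { assert (H := is_lim_seq_le (sum_n a) (fun _ => F 1) S (F 1) Hb HS (is_lim_seq_const _)).
    exact H. }
  assert (HS2 : F 1 <= S).
  { assert (H := filterlim_le (F := at_left 1) F (fun _ => S) (F 1) S).
    simpl in H. apply H.
    - apply filter_imp with (2 := at_left_01). intros s Hs01.
      assert (H2 := is_lim_seq_le (sum_n (fun n => a n * s ^ n)) (sum_n a) (F s) S).
      simpl in H2. apply H2; auto.
      + intros N; apply sum_pow_upper; auto; lra.
      + apply (Hs s Hs01).
    - exact HcL.
    - apply filterlim_const. }
  replace (F 1) with S by lra. exact HS.
Qed.

Lemma fact_moments (p : nat -> R) (T : nat -> R -> R) :
  (forall n, 0 <= p n) ->
  (forall s, 0 <= s <= 1 -> is_series (fun n => p n * s ^ n) (T O s)) ->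
  (forall k s, (k < 5)%nat -> 0 < s <= 1 -> is_derive (T k) s (T (S k) s)) ->
  forall k, (k <= 4)%nat -> is_series (PS_derive_n k p) (T k 1).
Proof.
  intros Hp H0 Hd.
  assert (HCV : Rbar_le 1 (CV_radius p)).
  { unfold CV_radius. destruct (Lub_Rbar_correct (CV_disk p)) as [Hub _].
    apply Hub. unfold CV_disk. exists (T O 1).
    eapply is_series_ext; [|apply H0; lra].
    intros n; simpl. rewrite pow1, Rmult_1_r, Rabs_pos_eq; auto. }
  assert (Hin : forall s, 0 < s < 1 -> Rbar_lt (Rabs s) (CV_radius p)).
  { intros s Hs. eapply Rbar_lt_le_trans; [|exact HCV]. simpl.
    rewrite Rabs_pos_eq; lra. }
  assert (HD : forall k, (k <= 4)%nat -> forall s, 0 < s < 1 ->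
             Derive_n (PSeries p) k s = T k s).
  { induction k as [|k IH]; intros Hk s Hs.
    - simpl. unfold PSeries. apply is_series_unique. apply H0; lra.
    - simpl. rewrite (Derive_ext_loc _ (T k)).
      + apply is_derive_unique. apply Hd; lia || lra.
      + apply (locally_interval _ s (Finite 0) (Finite 1)); simpl; try lra.
        intros y Hy0 Hy1. apply IH; [lia|lra]. }
  intros k Hk.
  apply monotone_abel.
  - intros n. unfold PS_derive_n. apply Rmult_le_pos; auto.
    apply Rmult_le_pos; [apply pos_INR|]. apply Rlt_le, Rinv_0_lt_compat.
    apply lt_0_INR, Nat.lt_0_succ || (apply lt_0_INR; apply Factorial.lt_O_fact) || (apply INR_fact_lt_0).
  - intros s Hs. rewrite <- HD by auto. rewrite Derive_n_PSeries by auto.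
    unfold PSeries. apply Series_correct. apply ex_series_Rabs.
    apply CV_disk_inside. rewrite CV_radius_derive_n. auto.
  - apply (ex_derive_continuous (K := R_AbsRing) (V := R_NormedModule)).
    exists (T (S k) 1). apply Hd; lia || lra.
Qed.

Definition mono := (R * nat * nat)%type.
Definition evalP (L : list mono) (q r : R) : R :=
  fold_right (fun m acc => let '(c, i, j) := m in c * q ^ i * r ^ j + acc) 0 L.
Definition derM (al d : R) (m : mono) : list mono :=
  let '(c, i, j) := m in
  (c, S i, j) :: (c * INR i * al, i, S j) :: (c * INR i * d, S i, j) :: (c * INR j, i, S j) :: nil.
Definition derL (al d : R) (L : list mono) : list mono := flat_map (derM al d) L.

Lemma evalP_app L1 L2 q r : evalP (L1 ++ L2) q r = evalP L1 q r + evalP L2 q r.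
Proof.
  induction L1 as [|[[c i] j] L IH]; simpl; [ring|]. rewrite IH. ring.
Qed.

Lemma mono_der (g q r : R -> R) (al d s c : R) (i j : nat) :
  is_derive g s (g s * q s) ->
  is_derive q s (q s * (al * r s + d * q s)) ->
  is_derive r s (r s ^ 2) ->
  is_derive (fun x => g x * (c * q x ^ i * r x ^ j)) s
    (g s * evalP (derM al d (c, i, j)) (q s) (r s)).
Proof.
  intros Hg Hq Hr.
  assert (Eg : ex_derive g s) by (eexists; eauto).
  assert (Eq : ex_derive q s) by (eexists; eauto).
  assert (Er : ex_derive r s) by (eexists; eauto).
  assert (Dg : Derive (fun x => g x) s = g s * q s) by (apply is_derive_unique; exact Hg).
  assert (Dq : Derive (fun x => q x) s = q s * (al * r s + d * q s)) by (apply is_derive_unique; exact Hq).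
  assert (Dr : Derive (fun x => r x) s = r s ^ 2) by (apply is_derive_unique; exact Hr).
  auto_derive; [repeat split; assumption|].
  rewrite Dg, Dq, Dr. simpl.
  destruct i as [|i]; destruct j as [|j]; simpl; rewrite ?Rmult_0_l, ?Rmult_0_r; ring.
Qed.

Lemma list_der (g q r : R -> R) (al d s : R) (L : list mono) :
  is_derive g s (g s * q s) ->
  is_derive q s (q s * (al * r s + d * q s)) ->
  is_derive r s (r s ^ 2) ->
  is_derive (fun x => g x * evalP L (q x) (r x)) s
    (g s * evalP (derL al d L) (q s) (r s)).
Proof.
  intros Hg Hq Hr.
  induction L as [|[[c i] j] L IH].
  - simpl. rewrite Rmult_0_r.
    apply is_derive_ext with (f := fun _ => 0); [intros t; simpl; rewrite Rmult_0_r; reflexivity|].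
    apply (is_derive_const 0).
  - change (derL al d ((c, i, j) :: L)) with (derM al d (c, i, j) ++ derL al d L).
    rewrite evalP_app.
    eapply is_derive_ext with (f := fun x => g x * (c * q x ^ i * r x ^ j) + g x * evalP L (q x) (r x)).
    { intros t; simpl; ring. }
    replace (g s * (evalP (derM al d (c, i, j)) (q s) (r s) + evalP (derL al d L) (q s) (r s)))
      with (plus (g s * evalP (derM al d (c, i, j)) (q s) (r s)) (g s * evalP (derL al d L) (q s) (r s)))
      by (unfold plus; simpl; ring).
    apply (is_derive_plus (fun x => g x * (c * q x ^ i * r x ^ j)) (fun x => g x * evalP L (q x) (r x))).
    + apply mono_der; auto.
    + exact IH.
Qed.

Definition Lk (al d : R) (k : nat) : list mono := Nat.iter k (derL al d) ((1, O, O) :: nil).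

Definition Xf a c s := Rpower (1 - c * s) a.
Definition Hf a b c d s := 1 + sgn a * b * d * (Xf a c s - Rpower (1 - c) a).
Definition Gf a b c d s := Rpower (Hf a b c d s) (- (1 / d)).
Definition Qf a b c d s := Rabs a * b * c * Xf a c s / ((1 - c * s) * Hf a b c d s).
Definition Rf c s := c / (1 - c * s).

Lemma sgn_mul a : sgn a * a = Rabs a.
Proof.
  unfold sgn. destruct (Rlt_dec 0 a).
  - rewrite Rabs_pos_eq; lra.
  - destruct (Rlt_dec a 0).
    + rewrite Rabs_left; lra.
    + assert (a = 0) by lra. subst. rewrite Rabs_R0; ring.
Qed.

Lemma X_der a c s : 0 < 1 - c * s ->
  is_derive (Xf a c) s (- (a * c) * Xf a c s / (1 - c * s)).
Proof.
  intros H. unfold Xf, Rpower. auto_derive; [lra|]. replace (1 + - (c * s)) with (1 - c * s) by ring. field. lra.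
Qed.

Lemma Rpower_der (h : R -> R) s h' e : is_derive h s h' -> 0 < h s ->
  is_derive (fun x => Rpower (h x) e) s (e * h' / h s * Rpower (h s) e).
Proof.
  intros Hd Hp. unfold Rpower.
  assert (Eh : ex_derive h s) by (eexists; eauto).
  assert (Dh : Derive (fun x => h x) s = h') by (apply is_derive_unique; exact Hd).
  auto_derive; [split; [assumption|split; [lra|tauto]]|].
  rewrite Dh. field. lra.
Qed.

Lemma H_der a b c d s : 0 < 1 - c * s -> 0 < Hf a b c d s ->
  is_derive (Hf a b c d) s (- d * Qf a b c d s * Hf a b c d s).
Proof.
  intros H1 H2.
  assert (Hx := X_der a c s H1).
  assert (Ex : ex_derive (Xf a c) s) by (eexists; eauto).
  assert (Dx : Derive (fun x => Xf a c x) s = - (a * c) * Xf a c s / (1 - c * s))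
    by (apply is_derive_unique; exact Hx).
  unfold Hf at 1. auto_derive; [exact Ex|].
  match goal with |- context [Derive ?f s] =>
    replace (Derive f s) with (- (a * c) * Xf a c s / (1 - c * s)) by (symmetry; apply is_derive_unique; exact Hx) end. unfold Qf. rewrite <- sgn_mul. field. lra.
Qed.

Lemma G_der a b c d s : 0 < d -> 0 < 1 - c * s -> 0 < Hf a b c d s ->
  is_derive (Gf a b c d) s (Gf a b c d s * Qf a b c d s).
Proof.
  intros Hd H1 H2.
  assert (H := Rpower_der (Hf a b c d) s _ (- (1 / d)) (H_der a b c d s H1 H2) H2).
  unfold Gf.
  replace (Rpower (Hf a b c d s) (- (1 / d)) * Qf a b c d s) with
    (- (1 / d) * (- d * Qf a b c d s * Hf a b c d s) / Hf a b c d s *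
     Rpower (Hf a b c d s) (- (1 / d))) by (field; lra).
  exact H.
Qed.

Lemma Q_der a b c d s : 0 < 1 - c * s -> 0 < Hf a b c d s ->
  is_derive (Qf a b c d) s (Qf a b c d s * ((1 - a) * Rf c s + d * Qf a b c d s)).
Proof.
  intros H1 H2.
  assert (Hx := X_der a c s H1).
  assert (Hh := H_der a b c d s H1 H2).
  assert (Ex : ex_derive (Xf a c) s) by (eexists; eauto).
  assert (Eh : ex_derive (Hf a b c d) s) by (eexists; eauto).
  unfold Qf at 1. auto_derive.
  { repeat split; try assumption. apply Rgt_not_eq. apply Rmult_lt_0_compat; lra. }
  repeat match goal with |- context [Derive ?f s] =>
    match f with
    | context [Xf] => replace (Derive f s) with (- (a * c) * Xf a c s / (1 - c * s)) by (symmetry; apply is_derive_unique; exact Hx)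
    | context [Hf] => replace (Derive f s) with (- d * Qf a b c d s * Hf a b c d s) by (symmetry; apply is_derive_unique; exact Hh)
    end end.
  unfold Qf, Rf. field. lra.
Qed.

Lemma R_der c s : 0 < 1 - c * s -> is_derive (Rf c) s (Rf c s ^ 2).
Proof. intros H. unfold Rf. auto_derive; [lra|]. field. lra. Qed.

Lemma exp_le_mono x y : x <= y -> exp x <= exp y.
Proof. intros H. destruct (Rle_lt_or_eq_dec _ _ H) as [H'|H']; [apply Rlt_le, exp_increasing; exact H'|subst; lra]. Qed.

Lemma dom a b c d s : 0 < b -> 0 < d -> 0 < c < 1 -> 0 <= s <= 1 ->
  0 < 1 - c * s /\ 1 <= Hf a b c d s.
Proof.
  intros Hb Hd Hc Hs.
  assert (Hw : 1 - c <= 1 - c * s) by nra.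
  split; [lra|].
  assert (Hl : ln (1 - c) <= ln (1 - c * s)) by (apply ln_le; lra).
  assert (0 <= sgn a * (Xf a c s - Rpower (1 - c) a)).
  { unfold sgn, Xf, Rpower. destruct (Rlt_dec 0 a).
    - assert (exp (a * ln (1 - c)) <= exp (a * ln (1 - c * s))) by (apply exp_le_mono; nra). lra.
    - destruct (Rlt_dec a 0).
      + assert (exp (a * ln (1 - c * s)) <= exp (a * ln (1 - c))) by (apply exp_le_mono; nra). lra.
      + lra. }
  unfold Hf.
  assert (0 <= b * d) by nra.
  nra.
Qed.

Lemma pgf_eq a b c d s : 0 < c < 1 -> 0 <= s <= 1 -> TDL_pgf a b c d s = Gf a b c d s.
Proof.
  intros Hc Hs. unfold TDL_pgf, Gf, Hf, Xf, rpow.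
  destruct (Rle_dec (1 - c * s) 0); [nra|].
  destruct (Rle_dec (1 - c) 0); [lra|]. reflexivity.
Qed.

Definition f1 (n : nat) := INR n.
Definition f2 (n : nat) := INR n * (INR n - 1).
Definition f3 (n : nat) := INR n * (INR n - 1) * (INR n - 2).
Definition f4 (n : nat) := INR n * (INR n - 1) * (INR n - 2) * (INR n - 3).

Ltac conv_tac p l f k :=
  intros H; apply (is_series_decr_n _ k); [lia|];
  match goal with |- is_series _ ?V =>
    replace V with l;
    [| symmetry; simpl; rewrite ?sum_Sn, ?sum_O; unfold plus, opp; simpl;
       match goal with |- ?x = ?y => change (@eq R x y) end;
       unfold f1, f2, f3, f4; simpl; ring ]
  end;
  eapply is_series_ext; [|exact H]; intros m; unfold PS_derive_n;
  rewrite (Nat.add_comm m k); simpl Factorial.fact;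
  unfold f1, f2, f3, f4;
  repeat (rewrite mult_INR || rewrite plus_INR || rewrite S_INR); simpl INR;
  match goal with |- ?x = ?y => change (@eq R x y) end;
  field; apply INR_fact_neq_0.

Lemma conv1 p l : is_series (PS_derive_n 1 p) l -> is_series (fun n => f1 n * p n) l.
Proof. conv_tac p l f1 1%nat. Qed.
Lemma conv2 p l : is_series (PS_derive_n 2 p) l -> is_series (fun n => f2 n * p n) l.
Proof. conv_tac p l f2 2%nat. Qed.
Lemma conv3 p l : is_series (PS_derive_n 3 p) l -> is_series (fun n => f3 n * p n) l.
Proof. conv_tac p l f3 3%nat. Qed.
Lemma conv4 p l : is_series (PS_derive_n 4 p) l -> is_series (fun n => f4 n * p n) l.
Proof. conv_tac p l f4 4%nat. Qed.

Lemma comb (u0 u1 u2 u3 u4 g : nat -> R) (l0 l1 l2 l3 l4 c0 c1 c2 c3 c4 : R) :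
  is_series u0 l0 -> is_series u1 l1 -> is_series u2 l2 -> is_series u3 l3 -> is_series u4 l4 ->
  (forall n, g n = c0 * u0 n + (c1 * u1 n + (c2 * u2 n + (c3 * u3 n + c4 * u4 n)))) ->
  is_series g (c0 * l0 + (c1 * l1 + (c2 * l2 + (c3 * l3 + c4 * l4)))).
Proof.
  intros H0 H1 H2 H3 H4 Hg.
  assert (H := is_series_plus _ _ _ _ (is_series_scal c0 _ _ H0)
    (is_series_plus _ _ _ _ (is_series_scal c1 _ _ H1)
    (is_series_plus _ _ _ _ (is_series_scal c2 _ _ H2)
    (is_series_plus _ _ _ _ (is_series_scal c3 _ _ H3) (is_series_scal c4 _ _ H4))))).
  eapply is_series_ext; [|exact H]. intros n. rewrite Hg. reflexivity.
Qed.

Lemma Lk1 al d q r : evalP (Lk al d 1) q r = q.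
Proof. cbv [Lk Nat.iter derL derM flat_map app evalP fold_right INR nat_rect]. ring. Qed.
Lemma Lk2 al d q r : evalP (Lk al d 2) q r = q * r * al + q * q + q * q * d.
Proof. cbv [Lk Nat.iter derL derM flat_map app evalP fold_right INR nat_rect]. ring. Qed.
Lemma Lk3 al d q r : evalP (Lk al d 3) q r =
  q*r*r*al + q*r*r*al*al + 3*q*q*r*al + 3*q*q*r*al*d + q*q*q + 3*q*q*q*d + 2*q*q*q*d*d.
Proof. cbv [Lk Nat.iter derL derM flat_map app evalP fold_right INR nat_rect]. ring. Qed.
Lemma Lk4 al d q r : evalP (Lk al d 4) q r =
  2*q*r*r*r*al + 3*q*r*r*r*al*al + q*r*r*r*al*al*al + 4*q*q*r*r*al + 4*q*q*r*r*al*d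
  + 7*q*q*r*r*al*al + 7*q*q*r*r*al*al*d + 6*q*q*q*r*al + 18*q*q*q*r*al*d
  + 12*q*q*q*r*al*d*d + q*q*q*q + 6*q*q*q*q*d + 11*q*q*q*q*d*d + 6*q*q*q*q*d*d*d.
Proof. cbv [Lk Nat.iter derL derM flat_map app evalP fold_right INR nat_rect]. ring. Qed.

Ltac toR := match goal with |- ?x = ?y => change (@eq R x y) end.

Lemma is_series_val (u : nat -> R) l l' : is_series u l -> l = l' -> is_series u l'.
Proof. intros H E; subst; exact H. Qed.

Theorem mainTheorem7 (a b c d : R) (p : nat -> R) :
  TDL_admissible a b c d -> a <> 0 -> 0 < c < 1 ->
  is_TDL_pmf a b c d p ->
  exists mu sigma2 : R,
    infinite_sum (fun n => INR n * p n) mu /\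
    infinite_sum (fun n => (INR n - mu) ^ 2 * p n) sigma2 /\
    let sigma := sqrt sigma2 in
    let D := sigma2 / mu in
    let m3 := sigma2 ^ 2 / mu + d * mu * sigma2
              + c * (1 - a) * mu / (1 - c) ^ 2 in
    let m4 := 3 * (2 * d + 1) * sigma2 ^ 2
              + (4 * c * (1 - a) + (1 - a * c) ^ 2) * sigma2 / (1 - c) ^ 2
              + c ^ 2 * (1 - a ^ 2) * mu / (1 - c) ^ 3 in
    infinite_sum (fun n => (INR n - mu) ^ 3 * p n) m3 /\
    infinite_sum (fun n => (INR n - mu) ^ 4 * p n) m4 /\
    m3 / sigma ^ 3 = D / sigma + d * sigma / D
                     + c * (1 - a) / ((1 - c) ^ 2 * sigma * D) /\
    m4 / sigma ^ 4 = 3 * (2 * d + 1)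
                     + (4 * c * (1 - a) + (1 - a * c) ^ 2) / ((1 - c) ^ 2 * sigma ^ 2)
                     + c ^ 2 * (1 - a ^ 2) / ((1 - c) ^ 3 * sigma ^ 2 * D).
Proof.
  intros [Hd [Hb Hadm]] Ha0 Hc [Hp Hpgf].
  assert (Hale : a <= 1) by (destruct Hadm as [[? ?]|[? ?]]; lra).
  set (T := fun k s => Gf a b c d s * evalP (Lk (1 - a) d k) (Qf a b c d s) (Rf c s)).
  assert (Hser : forall s, 0 <= s <= 1 -> is_series (fun n => p n * s ^ n) (T O s)).
  { intros s Hs. assert (Hpgf' := proj2 (is_series_Reals _ _) (Hpgf s Hs)).
    rewrite pgf_eq in Hpgf' by auto. unfold T; simpl. 
    eapply is_series_val; [exact Hpgf'|]. toR. toR; ring. }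
  assert (Hder : forall k s, (k < 5)%nat -> 0 < s <= 1 -> is_derive (T k) s (T (S k) s)).
  { intros k s Hk Hs. destruct (dom a b c d s Hb Hd Hc (conj (Rlt_le _ _ (proj1 Hs)) (proj2 Hs))) as [Hw HH].
    apply (list_der (Gf a b c d) (Qf a b c d) (Rf c) (1 - a) d s).
    - apply G_der; lra.
    - apply Q_der; lra.
    - apply R_der; lra. }
  assert (HF := fact_moments p T Hp Hser Hder).
  destruct (dom a b c d 1 Hb Hd Hc ltac:(lra)) as [Hw1 _].
  assert (HH1 : Hf a b c d 1 = 1).
  { unfold Hf, Xf. rewrite Rmult_1_r. toR; ring. }
  assert (HG1 : Gf a b c d 1 = 1).
  { unfold Gf, Rpower. rewrite HH1, ln_1, Rmult_0_r, exp_0. reflexivity. }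
  set (mu := Qf a b c d 1).
  set (r := Rf c 1).
  set (al := 1 - a).
  assert (Hmu : 0 < mu).
  { unfold mu, Qf. rewrite HH1, Rmult_1_r. unfold Xf, Rpower.
    assert (0 < Rabs a) by (apply Rabs_pos_lt; exact Ha0).
    assert (0 < exp (a * ln (1 - c * 1))) by apply exp_pos.
    apply Rdiv_lt_0_compat; [|lra].
    repeat apply Rmult_lt_0_compat; lra. }
  assert (Hr : r = c / (1 - c)) by (unfold r, Rf; rewrite Rmult_1_r; reflexivity).
  assert (Hr0 : 0 < r) by (rewrite Hr; apply Rdiv_lt_0_compat; lra).
  assert (E0 : is_series p 1).
  { assert (H := Hser 1 ltac:(lra)). unfold T in H; simpl in H. rewrite HG1 in H.
    eapply is_series_ext; [|eapply is_series_val; [exact H|toR; ring]]. intros n; simpl. rewrite pow1; toR; ring. }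
  assert (E1 : is_series (fun n => f1 n * p n) mu).
  { apply conv1. eapply is_series_val; [apply HF; lia|]. unfold T. rewrite HG1, Lk1. fold mu. toR; ring. }
  assert (E2 : is_series (fun n => f2 n * p n) (mu * r * al + mu * mu + mu * mu * d)).
  { apply conv2. eapply is_series_val; [apply HF; lia|]. unfold T. rewrite HG1, Lk2. fold mu r al. toR; ring. }
  assert (E3 : is_series (fun n => f3 n * p n)
     (mu*r*r*al + mu*r*r*al*al + 3*mu*mu*r*al + 3*mu*mu*r*al*d + mu*mu*mu + 3*mu*mu*mu*d + 2*mu*mu*mu*d*d)).
  { apply conv3. eapply is_series_val; [apply HF; lia|]. unfold T. rewrite HG1, Lk3. fold mu r al. toR; ring. }
  assert (E4 : is_series (fun n => f4 n * p n)
     (2*mu*r*r*r*al + 3*mu*r*r*r*al*al + mu*r*r*r*al*al*al + 4*mu*mu*r*r*al + 4*mu*mu*r*r*al*d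
  + 7*mu*mu*r*r*al*al + 7*mu*mu*r*r*al*al*d + 6*mu*mu*mu*r*al + 18*mu*mu*mu*r*al*d
  + 12*mu*mu*mu*r*al*d*d + mu*mu*mu*mu + 6*mu*mu*mu*mu*d + 11*mu*mu*mu*mu*d*d + 6*mu*mu*mu*mu*d*d*d)).
  { apply conv4. eapply is_series_val; [apply HF; lia|]. unfold T. rewrite HG1, Lk4. fold mu r al. toR; ring. }
  set (sigma2 := mu * (1 + d * mu + al * r)).
  assert (Hs2 : 0 < sigma2).
  { unfold sigma2. apply Rmult_lt_0_compat; [lra|].
    assert (0 <= al * r) by (unfold al; apply Rmult_le_pos; lra).
    assert (0 < d * mu) by (apply Rmult_lt_0_compat; lra). lra. }
  exists mu, sigma2.
  split; [|split].
  - apply is_series_Reals. eapply is_series_ext; [|exact E1]. intros n; reflexivity.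
  - apply is_series_Reals.
    eapply is_series_val.
    + apply (comb p _ _ _ _ _ _ _ _ _ _ (mu ^ 2) (1 - 2 * mu) 1 0 0 E0 E1 E2 E3 E4).
      intros n. unfold f1, f2, f3, f4. toR; ring.
    + unfold sigma2. toR; ring.
  - cbv zeta.
    assert (Hsq : sqrt sigma2 * sqrt sigma2 = sigma2) by (apply sqrt_sqrt; lra).
    assert (Hsp : 0 < sqrt sigma2) by (apply sqrt_lt_R0; lra).
    split; [|split; [|split]].
    + apply is_series_Reals.
      eapply is_series_val.
      * apply (comb p _ _ _ _ _ _ _ _ _ _ (- mu ^ 3) (1 - 3 * mu + 3 * mu ^ 2) (3 - 3 * mu) 1 0 E0 E1 E2 E3 E4).
        intros n. unfold f1, f2, f3, f4. toR; ring.
      * unfold sigma2, al. rewrite Hr. toR; field. lra.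
    + apply is_series_Reals.
      eapply is_series_val.
      * apply (comb p _ _ _ _ _ _ _ _ _ _ (mu ^ 4) (1 - 4 * mu + 6 * mu ^ 2 - 4 * mu ^ 3)
                 (7 - 12 * mu + 6 * mu ^ 2) (6 - 4 * mu) 1 E0 E1 E2 E3 E4).
        intros n. unfold f1, f2, f3, f4. toR; ring.
      * unfold sigma2, al. rewrite Hr. toR; field. lra.
    + set (sg := sqrt sigma2) in *. clearbody sg. rewrite <- Hsq. toR; field. split; lra.
    + set (sg := sqrt sigma2) in *. clearbody sg. rewrite <- Hsq. toR; field. split; lra.
Qed.
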